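(* Let $X=\{0,1\}$ and let $G_L$ be the group of automorphisms of the binary tree $X^*$ generated by $a,b$ defined by the wreath recursions $a=\psi_a(a,\mathbb 1)$, $b=\psi_b(b,a)$, where $\psi_a=(0\,1)$ and $\psi_b$ is the identity, i.e. $a(0w)=1a(w)$, $a(1w)=0w$, $b(0w)=0b(w)$, $b(1w)=1a(w)$. Let $\Gamma_n$ denote the Schreier graph of $G_L$ on $X^n$ with respect to $S=\{a,b,a^{-1},b^{-1}\}$. Then: (1) if $m>n\ge1$, the map $\pi:\Gamma_m\to\Gamma_n$, $\pi(x_1\cdots x_m)=x_1\cdots x_n$, is an unramified covering; (2) for every $n\ge1$, $\pi:\Gamma_{n+1}\to\Gamma_n$ is a normal (Galois) covering with Galois group $\mathrm{Gal}(\Gamma_{n+1}|\Gamma_n)\cong\mathbb Z/2\mathbb Z$.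
   Context: Schreier graph $\Gamma_n$: vertex set $X^n$; for every $v\in X^n$ and $s\in S$ an edge joining $v$ and $s(v)$ (the edge from $s$ at $v$ identified with the one from $s^{-1}$ at $s(v)$), so $\Gamma_n$ is a $4$-regular multigraph with loops allowed. A surjective graph map $\pi:\widetilde Y\to Y$ is an unramified covering if for every vertex $u$ of $Y$ and $v\in\pi^{-1}(u)$ it maps the neighbours of $v$ bijectively onto the neighbours of $u$; it is $d$-sheeted if fibres have size $d$, and normal (Galois) if there are $d$ graph automorphisms $\sigma$ of $\widetilde Y$ with $\pi\circ\sigma=\pi$, forming the Galois group. *)

(* Defs.v *)
From HB Require Import structures.
From mathcomp Require Import all_boot all_order all_algebra.
Set Implicit Arguments. Unset Strict Implicit. Unset Printing Implicit Defensive.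

(* ---------- Generic finite multigraphs (with loops / multiple edges) ------
   A multigraph is given by a finite vertex type V, a finite type D of darts
   (oriented half-edges), the origin map org : D -> V and the reversal
   rev : D -> D (each undirected edge = a pair {d, rev d}; a loop has both
   darts based at the same vertex).  The neighbours of v (with multiplicity)
   are the darts d with org d = v (the neighbour is org (rev d)). *)

Section Generic.
Variables (V D V' D' : finType).
Variables (org : D -> V) (rev : D -> D) (org' : D' -> V') (rev' : D' -> D').

Definition graph_map (fV : V -> V') (fD : D -> D') : Prop :=
  (forall d, org' (fD d) = fV (org d)) /\ (forall d, fD (rev d) = rev' (fD d)).

Definition unramified_covering (fV : V -> V') (fD : D -> D') : Prop :=
  [/\ graph_map fV fD,
      (forall u : V', exists v : V, fV v = u) &
      (forall (v : V) (e : D'), org' e = fV v ->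
          exists! d : D, org d = v /\ fD d = e)].

Definition sheeted (fV : V -> V') (k : nat) : Prop :=
  forall u : V', #|[pred v | fV v == u]| = k.

Definition is_deck (fV : V -> V') (fD : D -> D')
   (s : {ffun V -> V} * {ffun D -> D}) : bool :=
  [&& injectiveb s.1, injectiveb s.2,
      [forall d, org (s.2 d) == s.1 (org d)],
      [forall d, s.2 (rev d) == rev (s.2 d)],
      [forall v, fV (s.1 v) == fV v] &
      [forall d, fD (s.2 d) == fD d]].

Definition deck_group (fV : V -> V') (fD : D -> D')
  : {set {ffun V -> V} * {ffun D -> D}} := [set s | is_deck fV fD s].

Definition deck_comp (s t : {ffun V -> V} * {ffun D -> D})
  : {ffun V -> V} * {ffun D -> D} :=
  ([ffun v => s.1 (t.1 v)], [ffun d => s.2 (t.2 d)]).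

Definition normal_covering (fV : V -> V') (fD : D -> D') : Prop :=
  unramified_covering fV fD /\
  exists k, sheeted fV k /\ #|deck_group fV fD| = k.

End Generic.

(* ---------- The group G_L acting on the binary tree ---------------------
   X = {0,1} encoded as bool with 0 = false, 1 = true.
   a(0w) = 1 a(w), a(1w) = 0 w ;  b(0w) = 0 b(w), b(1w) = 1 a(w). *)

Fixpoint actA (w : seq bool) : seq bool :=
  match w with
  | [::] => [::]
  | false :: w' => true :: actA w'
  | true :: w' => false :: w'
  end.

Fixpoint actB (w : seq bool) : seq bool :=
  match w with
  | [::] => [::]
  | false :: w' => false :: actB w'
  | true :: w' => true :: actA w'
  end.

Lemma size_actA w : size (actA w) = size w.
Proof. by elim: w => [|[] w IH] //=; rewrite IH. Qed.

Lemma size_actB w : size (actB w) = size w.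
Proof. by elim: w => [|[] w IH] //=; rewrite ?IH ?size_actA. Qed.

Definition tA n (t : n.-tuple bool) : n.-tuple bool :=
  @Tuple n bool (actA t) (introT eqP (etrans (size_actA t) (size_tuple t))).
Definition tB n (t : n.-tuple bool) : n.-tuple bool :=
  @Tuple n bool (actB t) (introT eqP (etrans (size_actB t) (size_tuple t))).

Definition gen_act n (s : bool) : n.-tuple bool -> n.-tuple bool :=
  if s then @tB n else @tA n.

(* ---------- Schreier graph Gamma_n ---------------------------------------
   Vertices X^n; one edge for each (v, s) with v in X^n, s in {a, b}
   joining v and s(v) (this is the edge of s at v, identified with the edge
   of s^-1 at s(v)). *)
Definition SVert n := (n.-tuple bool)%type.
Definition SDart n := ((n.-tuple bool * bool) * bool)%type.

Definition sorg n (d : SDart n) : SVert n :=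
  let: ((v, s), o) := d in if o then v else gen_act s v.
Definition srev n (d : SDart n) : SDart n :=
  let: ((v, s), o) := d in ((v, s), ~~ o).

Definition projV n m (t : m.-tuple bool) : n.-tuple bool :=
  [tuple nth false t i | i < n].
Definition projD n m (d : SDart m) : SDart n :=
  let: ((v, s), o) := d in ((projV n v, s), o).

(* Main.v *)
Require Import Defs.
From HB Require Import structures.
From mathcomp Require Import all_boot all_order all_algebra.

Lemma projV_val n m (t : m.-tuple bool) : (n <= m)%N -> val (projV n t) = take n t.
Proof.
move=> le; apply: (@eq_from_nth _ false).
  by rewrite size_tuple size_takel // size_tuple.
move=> i; rewrite size_tuple => lt.
rewrite -[i]/(nat_of_ord (Ordinal lt)) -tnth_nth tnth_mktuple nth_take //.
Qed.

Lemma take_actA w n : take n (actA w) = actA (take n w).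
Proof. by elim: w n => [|[] w IH] [|n] //=; rewrite IH. Qed.

Lemma take_actB w n : take n (actB w) = actB (take n w).
Proof. by elim: w n => [|[] w IH] [|n] //=; rewrite ?IH ?take_actA. Qed.

Lemma actA_inj : injective actA.
Proof.
elim=> [|x w IH] [|y v] //=; first by case: y.
  by case: x.
case: x; case: y => //= -[]; first by move=> ->.
by move=> /IH ->.
Qed.

Lemma actB_inj : injective actB.
Proof.
elim=> [|x w IH] [|y v] //=; first by case: y.
  by case: x.
case: x; case: y => //= -[]; first by move=> /actA_inj ->.
by move=> /IH ->.
Qed.

Fixpoint flipl (w : seq bool) : seq bool :=
  match w with
  | [::] => [::]
  | [:: x] => [:: ~~ x]
  | x :: w' => x :: flipl w'
  end.

Lemma flipl_cons x w : w != [::] -> flipl (x :: w) = x :: flipl w.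
Proof. by case: w. Qed.

Lemma flipl_rcons u x : flipl (rcons u x) = rcons u (~~ x).
Proof.
elim: u => [|y u IH] //; rewrite rcons_cons flipl_cons ?IH //.
by case: u {IH}.
Qed.

Lemma size_flipl w : size (flipl w) = size w.
Proof. by case/lastP: w => [|u x] //; rewrite flipl_rcons !size_rcons. Qed.

Lemma fliplK : involutive flipl.
Proof. by case/lastP=> [|u x] //; rewrite !flipl_rcons negbK. Qed.

Lemma nil_size (w : seq bool) : (w != [::]) = (0 < size w)%N.
Proof. by case: w. Qed.

Lemma actA_f w : actA (false :: w) = true :: actA w. Proof. by []. Qed.
Lemma actA_t w : actA (true :: w) = false :: w. Proof. by []. Qed.
Lemma actB_f w : actB (false :: w) = false :: actB w. Proof. by []. Qed.
Lemma actB_t w : actB (true :: w) = true :: actA w. Proof. by []. Qed.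

Lemma flipl_actA w : flipl (actA w) = actA (flipl w).
Proof.
elim: w => [|x w IH] //; case: w IH => [|y w] IH; first by case: x.
rewrite [flipl (x :: _)]flipl_cons //.
case: x; first by rewrite actA_t actA_t flipl_cons.
rewrite actA_f actA_f flipl_cons ?IH //.
by rewrite nil_size size_actA.
Qed.

Lemma flipl_actB w : flipl (actB w) = actB (flipl w).
Proof.
elim: w => [|x w IH] //; case: w IH => [|y w] IH; first by case: x.
rewrite [flipl (x :: _)]flipl_cons //.
case: x.
  rewrite actB_t actB_t flipl_cons ?flipl_actA //.
  by rewrite nil_size size_actA.
rewrite actB_f actB_f flipl_cons ?IH //.
by rewrite nil_size size_actB.
Qed.

Lemma actA2 x w : actA (actA (x :: w)) = x :: actA w.
Proof. by case: x. Qed.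

Lemma iter2 k x w : iter (2 * k) actA (x :: w) = x :: iter k actA w.
Proof. by elim: k => [|k IH] //; rewrite mulnS !iterS IH actA2. Qed.

Lemma trans_actA v w : size v = size w -> exists k, iter k actA v = w.
Proof.
elim: w v => [|y w IH] [|x v] //=; first by exists 0.
move=> [] Hs.
have [<-|nxy] := eqVneq x y.
  have [k Hk] := IH _ Hs; exists (2 * k); by rewrite iter2 Hk.
have [v' e sv] : exists2 v', actA (x :: v) = (~~ x) :: v' & size v' = size v.
  by case: x {nxy}; eexists; rewrite //= size_actA.
have [k Hk] := IH v' (etrans sv Hs).
exists (2 * k).+1; rewrite iterSr e iter2 Hk.
by move: nxy; case: (x); case: (y).
Qed.

Lemma val_tA n (t : n.-tuple bool) : val (tA t) = actA t. Proof. by []. Qed.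
Lemma val_tB n (t : n.-tuple bool) : val (tB t) = actB t. Proof. by []. Qed.

Lemma projV_tA n m (t : m.-tuple bool) : (n <= m)%N -> projV n (tA t) = tA (projV n t).
Proof. by move=> le; apply: val_inj; rewrite val_tA projV_val ?val_tA ?projV_val // take_actA. Qed.

Lemma projV_tB n m (t : m.-tuple bool) : (n <= m)%N -> projV n (tB t) = tB (projV n t).
Proof. by move=> le; apply: val_inj; rewrite val_tB projV_val ?val_tB ?projV_val // take_actB. Qed.

Lemma projV_gen n m s (t : m.-tuple bool) : (n <= m)%N ->
  projV n (gen_act s t) = gen_act s (projV n t).
Proof. by case: s => le /=; [apply: projV_tB | apply: projV_tA]. Qed.

Lemma gen_inj n s : injective (@gen_act n s).
Proof.
case: s => x y /= /(congr1 val) /= e; apply: val_inj.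
  exact: actB_inj. exact: actA_inj.
Qed.

Lemma gen_surj n s (t : n.-tuple bool) : exists t', gen_act s t' = t.
Proof.
have [g _ K] := injF_bij (@gen_inj n s).
by exists (g t); rewrite K.
Qed.

Lemma part1 m n : (n <= m)%N ->
  unramified_covering (@sorg m) (@srev m) (@sorg n) (@srev n)
       (@projV n m) (@projD n m).
Proof.
move=> le; split.
- split; case=> [[v s] o] //; case: o => //; exact: (esym (@projV_gen n m s v le)).
- move=> u; exists [tuple nth false u i | i < m].
  apply: eq_from_tnth => i; rewrite tnth_mktuple.
  have lt : (i < m)%N by apply: leq_trans le.
  by rewrite -[nat_of_ord i]/(nat_of_ord (Ordinal lt)) -tnth_nth tnth_mktuple -tnth_nth.
- move=> v [[u s] []] /= H.
  + exists ((v, s), true); split; first by rewrite /= H.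
    case=> [[v' s'] o'] [] /= H1 [] Hp Hs Ho; subst s' o'.
    by rewrite H1.
  + have [v' Hv'] := @gen_surj m s v.
    exists ((v', s), false); split.
      split=> //=; congr (_, _, _); apply: (@gen_inj n s).
      by rewrite -(@projV_gen n m) // Hv' H.
    case=> [[v'' s'] o'] [] /= H1 [] Hp Hs Ho; subst s' o'.
    by rewrite -Hv' in H1; move/gen_inj: H1 => ->.
Qed.

Definition flipT n (t : n.-tuple bool) : n.-tuple bool :=
  @Tuple n bool (flipl t) (introT eqP (etrans (size_flipl t) (size_tuple t))).
Arguments flipT {n}.

Lemma flipTK n : involutive (@flipT n).
Proof. by move=> t; apply: val_inj; rewrite /= fliplK. Qed.

Lemma flipT_gen n s (t : n.-tuple bool) : gen_act s (flipT t) = flipT (gen_act s t).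
Proof. by case: s; apply: val_inj; rewrite /= ?flipl_actA ?flipl_actB. Qed.

Lemma take_flipl n w : size w = n.+1 -> take n (flipl w) = take n w.
Proof.
case/lastP: w => [|u x] //; rewrite size_rcons => -[su].
by rewrite flipl_rcons -!cats1 !take_size_cat.
Qed.

Lemma projV_flipT n (t : n.+1.-tuple bool) : projV n (flipT t) = projV n t.
Proof.
apply: val_inj; rewrite !projV_val // /flipT /= take_flipl // size_tuple //.
Qed.

Lemma flipT_neq n (t : n.+1.-tuple bool) : flipT t != t.
Proof.
apply/eqP => /(congr1 val) /=; case: t => w /=.
case/lastP: w => [|u x] //; rewrite flipl_rcons => _ /(congr1 (last false)).
by rewrite !last_rcons; case: x.
Qed.

Lemma fibl n (t w : seq bool) : size t = n.+1 -> size w = n.+1 ->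
  take n w = take n t -> w = t \/ w = flipl t.
Proof.
case/lastP: t => [|u x] //; case/lastP: w => [|u' y] //.
rewrite !size_rcons => -[su] [su'].
rewrite -!cats1 !take_size_cat // => eu; subst u'.
have [<-|nxy] := eqVneq y x; [by left|right].
rewrite !cats1 flipl_rcons; congr rcons.
by move: nxy; case: x; case: y.
Qed.

Lemma fibT n (t w : n.+1.-tuple bool) : projV n w = projV n t -> w = t \/ w = flipT t.
Proof.
move=> /(congr1 val); rewrite !projV_val // => /(@fibl n _ _ (size_tuple t) (size_tuple w)).
by case=> e; [left|right]; apply: val_inj.
Qed.

Lemma iter_tA n k (t : n.-tuple bool) : val (iter k (@tA n) t) = iter k actA t.
Proof. by elim: k => //= k <-. Qed.

Lemma transT n (t w : n.-tuple bool) : exists k, iter k (@tA n) t = w.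
Proof.
have [k Hk] := @trans_actA t w (etrans (size_tuple t) (esym (size_tuple w))).
by exists k; apply: val_inj; rewrite iter_tA.
Qed.

Lemma flipT_iter n k (t : n.-tuple bool) : flipT (iter k (@tA n) t) = iter k (@tA n) (flipT t).
Proof. elim: k => // k IH; rewrite !iterS -IH; exact: esym (@flipT_gen n false _). Qed.

Definition idD n : {ffun SVert n -> SVert n} * {ffun SDart n -> SDart n} :=
  ([ffun v => v], [ffun d => d]).
Definition flD n : {ffun SVert n -> SVert n} * {ffun SDart n -> SDart n} :=
  ([ffun v => flipT v], [ffun d : SDart n => let: ((v, s), o) := d in ((flipT v, s), o)]).

Lemma idD_deck n : idD n.+1 \in deck_group (@sorg n.+1) (@srev n.+1)
                                   (@projV n n.+1) (@projD n n.+1).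
Proof.
rewrite inE /is_deck; repeat (apply/andP; split).
- by apply/injectiveP => x y; rewrite !ffunE.
- by apply/injectiveP => x y; rewrite !ffunE.
- by apply/forallP => d; rewrite /= !ffunE.
- by apply/forallP => d; rewrite /= !ffunE.
- by apply/forallP => d; rewrite /= !ffunE.
- by apply/forallP => d; rewrite /= !ffunE.
Qed.

Lemma flD_deck n : flD n.+1 \in deck_group (@sorg n.+1) (@srev n.+1)
                                   (@projV n n.+1) (@projD n n.+1).
Proof.
rewrite inE /is_deck; repeat (apply/andP; split).
- apply/injectiveP => x y; rewrite !ffunE; exact: (can_inj (@flipTK n.+1)).
- apply/injectiveP => -[[x s] o] [[y t] p]; rewrite !ffunE /= => -[] E1 -> ->; congr (_, _, _); apply: val_inj; by rewrite /= -(fliplK x) E1 fliplK.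
- apply/forallP => -[[v s] []]; rewrite !ffunE //=.
  by rewrite flipT_gen.
- by apply/forallP => -[[v s] o]; rewrite !ffunE.
- by apply/forallP => v; rewrite !ffunE projV_flipT.
- by apply/forallP => -[[v s] o]; rewrite !ffunE /= projV_flipT.
Qed.

Lemma deck_char n s : s \in deck_group (@sorg n.+1) (@srev n.+1)
                                   (@projV n n.+1) (@projD n n.+1) ->
  s = idD n.+1 \/ s = flD n.+1.
Proof.
case: s => f g.
rewrite inE /is_deck /= => /andP[_ /andP[_ /andP[/forallP H1 /andP[/forallP H2 /andP[/forallP H3 /forallP H4]]]]].
have Et : forall v sg, g ((v, sg), true) = ((f v, sg), true).
  move=> v sg; move: (H4 ((v, sg), true)) (H1 ((v, sg), true)).
  by case: (g ((v, sg), true)) => [[v' sg'] o'] /eqP [] _ -> -> /eqP /= ->.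
have Ed : forall v sg o, g ((v, sg), o) = ((f v, sg), o).
  move=> v sg []; first exact: Et.
  by move: (H2 ((v, sg), true)) => /eqP /= ->; rewrite Et.
have Ec : forall v, f (tA v) = tA (f v).
  by move=> v; move: (H1 ((v, false), false)) => /eqP; rewrite Ed /= => ->.
have Ei : forall k v, f (iter k (@tA n.+1) v) = iter k (@tA n.+1) (f v).
  by move=> k v; elim: k => //= k IH; rewrite Ec IH.
pose v0 := [tuple false | _ < n.+1].
have [h|h] := @fibT n _ _ (eqP (H3 v0)).
- left; have Ef : forall v, f v = v.
    by move=> v; have [k <-] := @transT _ v0 v; rewrite Ei h.
  congr (_, _); apply/ffunP; [move=> v | case=> [[v sg] o]]; rewrite ffunE ?Ed ?Ef //.
- right; have Ef : forall v, f v = flipT v.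
    by move=> v; have [k <-] := @transT _ v0 v; rewrite Ei h flipT_iter.
  congr (_, _); apply/ffunP; [move=> v | case=> [[v sg] o]]; rewrite ffunE ?Ed ?Ef //.
Qed.

Lemma Z2_cases (x : 'Z_2) : x = 0%R \/ x = 1%R.
Proof.
case: x => [[|[|k]] H]; [left|right|by []]; exact: val_inj.
Qed.

Lemma idD_flD n : idD n.+1 != flD n.+1.
Proof.
apply/negP => /eqP E.
have /ffunP /(_ [tuple false | _ < n.+1]) := congr1 (fun p => p.1) E.
rewrite !ffunE => /esym /eqP; by rewrite (negbTE (@flipT_neq n _)).
Qed.

Theorem proposition6p1 :
  (forall m n : nat, (1 <= n)%N -> (n < m)%N ->
     unramified_covering (@sorg m) (@srev m) (@sorg n) (@srev n)
       (@projV n m) (@projD n m)) /\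
  (forall n : nat, (1 <= n)%N ->
     normal_covering (@sorg n.+1) (@srev n.+1) (@sorg n) (@srev n)
       (@projV n n.+1) (@projD n n.+1) /\
     exists phi : 'Z_2 -> {ffun SVert n.+1 -> SVert n.+1} * {ffun SDart n.+1 -> SDart n.+1},
       [/\ injective phi,
           (forall x, phi x \in deck_group (@sorg n.+1) (@srev n.+1)
                                   (@projV n n.+1) (@projD n n.+1)),
           (forall s, s \in deck_group (@sorg n.+1) (@srev n.+1)
                                   (@projV n n.+1) (@projD n n.+1) ->
                      exists x, phi x = s) &
           (forall x y, phi (x + y)%R = deck_comp (phi x) (phi y))]).
Proof.
split; first by move=> m n _ lt; apply: part1; apply: ltnW.
move=> n _; split.
  split; first exact: part1.
  exists 2; split.
    move=> u.
    have su : size (rcons u false) == n.+1 by rewrite size_rcons size_tuple.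
    pose v0 : n.+1.-tuple bool := Tuple su.
    have pv0 : projV n v0 = u.
      by apply: val_inj; rewrite projV_val //= -cats1 take_size_cat // size_tuple.
    rewrite (@eq_card _ _ (pred2 v0 (flipT v0))); first by rewrite card2 eq_sym (@flipT_neq n).
    move=> v; rewrite !inE /=; apply/eqP/orP.
      by rewrite -pv0 => /(@fibT n) [->|->]; [left|right].
    by case=> /eqP ->; rewrite ?projV_flipT.
  rewrite (_ : deck_group _ _ _ _ = [set idD n.+1; flD n.+1]).
    by rewrite cards2 idD_flD.
  apply/setP => s; rewrite in_set2; apply/idP/orP.
    by case/deck_char => ->; [left|right].
  by case=> /eqP ->; [exact: idD_deck | exact: flD_deck].
exists (fun x : 'Z_2 => if val x == 0%N then idD n.+1 else flD n.+1); split.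
- move=> x y; case: (Z2_cases x) => ->; case: (Z2_cases y) => -> //= E.
    by move: (idD_flD n); rewrite E eqxx.
  by move: (idD_flD n); rewrite E eqxx.
- by move=> x; case: ifP => _; [exact: idD_deck | exact: flD_deck].
- move=> s /deck_char [->|->]; [exists 0%R | exists 1%R]; by [].
- have e11 : (1 + 1 : 'Z_2)%R = 0%R by apply: val_inj.
  move=> x y; case: (Z2_cases x) => ->; case: (Z2_cases y) => ->;
    rewrite ?add0r ?addr0 ?e11 /=;
    congr (_, _); apply/ffunP => z; rewrite !ffunE;
    first [ by rewrite ?flipTK | by case: z => [[v sg] o]; rewrite /= ?flipTK ].
Qed.
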